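(* Let $K$ be a field, $S=K[x_1,\dots,x_n]$, $M$ a finitely generated graded $S$-module, ${\bf f}=f_1,\dots,f_m$ a sequence of homogeneous polynomials, $I=({\bf f})$, and $g_1,\dots,g_v\in I$ homogeneous; set ${\bf g}=g_1,\dots,g_v$. Then for every $i$, $$\operatorname{reg} Z_i({\bf f},M)\leq \operatorname{reg} Z_i({\bf f},{\bf g},M).$$
   Context: For a sequence ${\bf h}=h_1,\dots,h_r$ of homogeneous polynomials (not necessarily a minimal generating set of the ideal it generates), $K({\bf h},M)$ denotes the Koszul complex $\bigwedge^\bullet G\otimes_S M$, where $G=\bigoplus_{j=1}^r S(-\deg h_j)$ with basis $e_j$ of degree $\deg h_j$ and differential induced by $e_j\mapsto h_j$ (degree $0$); $Z_i({\bf h},M)$ is its graded module of cycles in homological position $i$. $({\bf f},{\bf g})$ denotes the concatenated sequence $f_1,\dots,f_m,g_1,\dots,g_v$. $\operatorname{reg}$ denotes Castelnuovo–Mumford regularity ($-\infty$ for the zero module). *)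

(* Defs.v *)
From HB Require Import structures.
From mathcomp Require Import all_boot all_order all_algebra.
From mathcomp Require Import mpoly.
Set Implicit Arguments. Unset Strict Implicit. Unset Printing Implicit Defensive.
Import Order.TTheory GRing.Theory Num.Theory.
Local Open Scope ring_scope.

Section Koszul.
Variables (K : fieldType) (n : nat).
Local Notation S := {mpoly K[n]}.

Definition graded_module (M : lmodType S) (hom : int -> M -> Prop) : Prop :=
  [/\ (forall d, hom d 0),
      (forall d x y, hom d x -> hom d y -> hom d (x + y)),
      (forall d (e : nat) (p : S) x, p \is e.-homog -> hom d x ->
                                     hom (d + e%:Z) (p *: x)),
      (forall x : M, exists (s : seq int) (xs : int -> M),
           (forall d, hom d (xs d)) /\ x = \sum_(d <- s) xs d) &
      (forall (s : seq int) (xs : int -> M), uniq s ->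
           (forall d, hom d (xs d)) -> \sum_(d <- s) xs d = 0 ->
           forall d, d \in s -> xs d = 0)].

Definition fin_gen (M : lmodType S) : Prop :=
  exists gens : seq M, forall x : M,
    exists c : 'I_(size gens) -> S, x = \sum_(i < size gens) c i *: gens`_i.

(* Koszul complex K(h, V) = ∧G ⊗ V, an element being represented by its
   coefficients c J (the coefficient of e_J = e_{j1} ∧ ... ∧ e_{jk},
   j1 < ... < jk, J = {j1,...,jk}).  Homological position i = support on
   sets of cardinality i.  Differential: e_J ↦ Σ_t (-1)^(t-1) h_{jt} e_{J\jt}. *)
Definition ksign r (J : {set 'I_r}) (j : 'I_r) : S :=
  (-1) ^+ #|[set k in J | (k < j)%N]|.

Definition kdiff (V : lmodType S) r (h : 'I_r -> S)
    (c : {ffun {set 'I_r} -> V}) : {ffun {set 'I_r} -> V} :=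
  [ffun J : {set 'I_r} => \sum_(j < r | j \notin J) (ksign J j * h j) *: c (j |: J)].

Definition kcycles (V : lmodType S) r (h : 'I_r -> S) (i : nat)
    (c : {ffun {set 'I_r} -> V}) : Prop :=
  (forall J : {set 'I_r}, #|J| <> i -> c J = 0) /\ kdiff h c = 0.

(* Grading of K(h, V): e_j has degree dh j, so c is homogeneous of degree d
   iff each coefficient c J is homogeneous of degree d - Σ_{j∈J} dh j. *)
Definition khom (V : lmodType S) r (dh : 'I_r -> int) (hom : int -> V -> Prop)
    (d : int) (c : {ffun {set 'I_r} -> V}) : Prop :=
  forall J : {set 'I_r}, hom (d - \sum_(j in J) dh j) (c J).

(* Castelnuovo–Mumford regularity through graded Betti numbers:
   reg N = max { j - k : Tor_k^S(K, N)_j <> 0 } (-oo if N = 0), where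
   Tor_k^S(K,N)_j = H_k(x_1..x_n; N)_j is computed by the Koszul complex of
   the variables.  regwit N hom k j  <->  H_k(x; N)_j <> 0, for a graded
   submodule N (a predicate) of an S-module V graded by hom:
   there is a homogeneous degree-j cycle of K_k(x; N) that is not a boundary. *)
Definition regwit (V : lmodType S) (N : V -> Prop) (hom : int -> V -> Prop)
    (k : nat) (j : int) : Prop :=
  exists c : {ffun {set 'I_n} -> V},
    [/\ (forall J : {set 'I_n}, N (c J)),
        (forall J : {set 'I_n}, #|J| <> k -> c J = 0),
        khom (fun _ => 1) hom j c,
        kdiff (fun i : 'I_n => 'X_i) c = 0 &
        ~ (exists b : {ffun {set 'I_n} -> V},
              (forall J : {set 'I_n}, N (b J)) /\ kdiff (fun i : 'I_n => 'X_i) b = c)].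

Definition reg_le (V1 V2 : lmodType S)
    (N1 : V1 -> Prop) (hom1 : int -> V1 -> Prop)
    (N2 : V2 -> Prop) (hom2 : int -> V2 -> Prop) : Prop :=
  forall (k : nat) (j : int), regwit N1 hom1 k j ->
    exists (k' : nat) (j' : int), regwit N2 hom2 k' j' /\ j - k%:Z <= j' - k'%:Z.

End Koszul.

Definition catf T m v (f : 'I_m -> T) (g : 'I_v -> T) (k : 'I_(m + v)) : T :=
  match split k with inl i => f i | inr j => g j end.

(* Main.v *)
Require Import Defs.
From HB Require Import structures.
From mathcomp Require Import all_boot all_order all_algebra.
From mathcomp Require Import mpoly.
From mathcomp Require Import ring.
Set Implicit Arguments. Unset Strict Implicit. Unset Printing Implicit Defensive.
Import Order.TTheory GRing.Theory Num.Theory.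
Local Open Scope ring_scope.

Section Ops.
Variables (K : fieldType) (n : nat) (V : lmodType {mpoly K[n]}) (r : nat).
Local Notation S := {mpoly K[n]}.
Local Notation sg := (@ksign K n r).
Local Notation KV := {ffun {set 'I_r} -> V}.

Lemma ksignU (L : {set 'I_r}) t j : t \notin L ->
  sg (t |: L) j = (if (t < j)%N then -1 else 1) * sg L j.
Proof.
move=> tL; rewrite /ksign; case: ifP => tj.
  have -> : [set k in t |: L | (k < j)%N] = t |: [set k in L | (k < j)%N].
    by apply/setP=> k; rewrite !inE; case: (eqVneq k t) => [->|] //=; rewrite tj.
  by rewrite cardsU1 inE (negbTE tL) /= add1n exprS.
have -> : [set k in t |: L | (k < j)%N] = [set k in L | (k < j)%N].
  by apply/setP=> k; rewrite !inE; case: (eqVneq k t) => [->|] //=; rewrite tj andbF.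
by rewrite mul1r.
Qed.

Lemma ksign2 L j : sg L j * sg L j = 1.
Proof. by rewrite -expr2 /ksign sqrr_sign. Qed.

Definition kwedge (u : 'I_r -> S) (c : KV) : KV :=
  [ffun J : {set 'I_r} => \sum_(t in J) (sg (J :\ t) t * u t) *: c (J :\ t)].
Definition delta (p : 'I_r) : 'I_r -> S := fun k => (k == p)%:R.

Lemma kdiff_ext (h h' : 'I_r -> S) (c : KV) : (forall k, h k = h' k) -> kdiff h c = kdiff h' c.
Proof. by move=> e; apply/ffunP=> J; rewrite !ffunE; apply: eq_bigr => k _; rewrite e. Qed.

Lemma kdiffD h (c1 c2 : KV) : kdiff h (c1 + c2) = kdiff h c1 + kdiff h c2.
Proof.
apply/ffunP=> J; rewrite !ffunE -big_split; apply: eq_bigr => k _.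
by rewrite ffunE scalerDr.
Qed.

Lemma kdiffZ h s (c : KV) : kdiff h (s *: c) = s *: kdiff h c.
Proof.
apply/ffunP=> J; rewrite !ffunE scaler_sumr; apply: eq_bigr => k _.
by rewrite ffunE !scalerA mulrC.
Qed.

Lemma kdiff0 h : kdiff h (0 : KV) = 0.
Proof. by apply/ffunP=> J; rewrite !ffunE big1 // => k _; rewrite ffunE scaler0. Qed.

Lemma kdiffN h (c : KV) : kdiff h (- c) = - kdiff h c.
Proof. by rewrite -scaleN1r kdiffZ scaleN1r. Qed.

Lemma kwedgeD u (c1 c2 : KV) : kwedge u (c1 + c2) = kwedge u c1 + kwedge u c2.
Proof.
apply/ffunP=> J; rewrite !ffunE -big_split; apply: eq_bigr => k _.
by rewrite ffunE scalerDr.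
Qed.

Lemma kwedgeZ u s (c : KV) : kwedge u (s *: c) = s *: kwedge u c.
Proof.
apply/ffunP=> J; rewrite !ffunE scaler_sumr; apply: eq_bigr => k _.
by rewrite ffunE !scalerA mulrC.
Qed.

Lemma kwedge0 u : kwedge u (0 : KV) = 0.
Proof. by apply/ffunP=> J; rewrite !ffunE big1 // => k _; rewrite ffunE scaler0. Qed.

Lemma kwedgeN u (c : KV) : kwedge u (- c) = - kwedge u c.
Proof. by rewrite -scaleN1r kwedgeZ scaleN1r. Qed.

Lemma kdiff_step h h' p w (c : KV) :
  (forall k, h' k = h k - delta p k * w) ->
  kdiff h' c = kdiff h c - w *: kdiff (delta p) c.
Proof.
move=> e; apply/ffunP=> J; rewrite !ffunE scaler_sumr -sumrB.
apply: eq_bigr => k _; rewrite e scalerA -scalerBl; congr (_ *: _); ring.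
Qed.

Lemma kdiff_anti a b (c : KV) : kdiff a (kdiff b c) + kdiff b (kdiff a c) = 0.
Proof.
pose T (a b : 'I_r -> S) (J : {set 'I_r}) (j k : 'I_r) : V :=
  if (j \notin J) && (k \notin j |: J) then
    (sg J j * a j * (sg (j |: J) k * b k)) *: c (k |: (j |: J)) else 0.
have E a' b' (J : {set 'I_r}) : kdiff a' (kdiff b' c) J = \sum_j \sum_k T a' b' J j k.
  rewrite ffunE big_mkcond; apply: eq_bigr => j _ /=.
  case: ifP => jJ; last by rewrite big1 // => k _; rewrite /T jJ.
  rewrite ffunE scaler_sumr big_mkcond; apply: eq_bigr => k _ /=.
  by rewrite /T jJ /=; case: ifP; rewrite ?scaler0 // scalerA.
apply/ffunP=> J; rewrite ffunE !E [X in _ + X = _]exchange_big -big_split ffunE.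
apply: big1 => j _; rewrite -big_split; apply: big1 => k _ /=.
rewrite /T !inE !negb_or.
case jJ: (j \in J); case kJ: (k \in J); rewrite ?andbF ?addr0 //=.
case: (eqVneq k j) => [->|kj]; rewrite ?eqxx ?andbF ?addr0 //.
rewrite /= setUCA -scalerDl (@ksignU J j k) ?jJ // (@ksignU J k j) ?kJ //.
case: (ltngtP j k) => [jk|kj'|/val_inj ejk]; last by rewrite ejk eqxx in kj.
- by rewrite (_ : _ + _ = 0) ?scale0r //; ring.
- by rewrite (_ : _ + _ = 0) ?scale0r //; ring.
Qed.

Lemma kdiff_wedge a u (c : KV) :
  kdiff a (kwedge u c) + kwedge u (kdiff a c) = (\sum_k u k * a k) *: c.
Proof.
apply/ffunP=> J; rewrite ffunE [RHS]ffunE.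
have L1 : kdiff a (kwedge u c) J = \sum_(j | j \notin J)
   ((sg J j * a j * (sg J j * u j)) *: c J + \sum_(t in J)
     (sg J j * a j * (sg (j |: (J :\ t)) t * u t)) *: c (j |: (J :\ t))).
  rewrite ffunE; apply: eq_bigr => j jJ.
  rewrite ffunE (big_setU1 _ jJ) /= setU1K // scalerDr scaler_sumr scalerA.
  congr (_ + _); apply: eq_bigr => t tJ; rewrite scalerA.
  have -> : (j |: J) :\ t = j |: (J :\ t).
    apply/setP=> x; rewrite !inE; case: (eqVneq x t) => [->|] //=.
    by case: (eqVneq t j) => [ejt|//]; rewrite -ejt tJ in jJ.
  by [].
have L2 : kwedge u (kdiff a c) J = \sum_(t in J)
   ((sg (J :\ t) t * u t * (sg (J :\ t) t * a t)) *: c J + \sum_(j | j \notin J)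
     (sg (J :\ t) t * u t * (sg (J :\ t) j * a j)) *: c (j |: (J :\ t))).
  rewrite ffunE; apply: eq_bigr => t tJ.
  rewrite ffunE (bigD1 t) ?inE ?eqxx //= setD1K // scalerDr scaler_sumr scalerA.
  congr (_ + _); apply: eq_big => [j|j _]; last by rewrite scalerA.
  by rewrite !inE; case: (eqVneq j t) => [->|]; rewrite ?tJ ?andbT.
rewrite L1 L2 !big_split /= addrACA.
rewrite [X in _ + X](_ : _ = 0) ?addr0.
  rewrite scaler_suml [RHS](bigID (mem J)) /= addrC; congr (_ + _); apply: eq_big => // k _.
    by rewrite mulrACA ksign2 mul1r mulrC.
  by rewrite mulrACA ksign2 mul1r mulrC.
rewrite [X in _ + X]exchange_big -big_split /=; apply: big1 => j jJ.
rewrite -big_split /=; apply: big1 => t tJ.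
rewrite -scalerDl.
have jt : j != t by apply: contraNneq jJ => ->.
have e : sg J j = (if (t < j)%N then -1 else 1) * sg (J :\ t) j.
  by rewrite -{1}(setD1K tJ) ksignU // !inE eqxx.
rewrite e ksignU ?inE ?negb_and ?jJ ?orbT //.
case: (ltngtP j t) => [jt'|tj'|/val_inj ejt]; last by rewrite ejt eqxx in jt.
- by rewrite (_ : _ + _ = 0) ?scale0r //; ring.
- by rewrite (_ : _ + _ = 0) ?scale0r //; ring.
Qed.

Lemma kdiff_delta2 p (c : KV) : kdiff (delta p) (kdiff (delta p) c) = 0.
Proof.
apply/ffunP=> J; rewrite !ffunE; apply: big1 => j _.
rewrite ffunE scaler_sumr; apply: big1 => k; rewrite !inE negb_or => /andP[kj _].
rewrite scalerA /delta.
case: (eqVneq k p) => [ekp|kp]; case: (eqVneq j p) => [ejp|jp];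
  rewrite /= ?mulr0 ?mul0r ?scale0r //.
by rewrite ekp ejp eqxx in kj.
Qed.

Lemma kdiff_delta0 (p : 'I_r) (c : KV) : (forall J : {set 'I_r}, p \in J -> c J = 0) -> kdiff (delta p) c = 0.
Proof.
move=> hc; apply/ffunP=> J; rewrite !ffunE; apply: big1 => j _.
case: (eqVneq j p) => [->|ne]; first by rewrite hc ?setU11 ?scaler0.
by rewrite /delta (negbTE ne) mulr0 scale0r.
Qed.

Definition kpsi u p (c : KV) : KV := c + kwedge u (kdiff (delta p) c).

Lemma kpsiD u p c1 c2 : kpsi u p (c1 + c2) = kpsi u p c1 + kpsi u p c2.
Proof. by rewrite /kpsi kdiffD kwedgeD addrACA. Qed.

Lemma kpsiZ u p s c : kpsi u p (s *: c) = s *: kpsi u p c.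
Proof. by rewrite /kpsi kdiffZ kwedgeZ scalerDr. Qed.

Lemma kpsi_chain h h' u p (c : KV) : u p = 0 ->
  (forall k, h' k = h k - delta p k * (\sum_k u k * h k)) ->
  kdiff h' (kpsi u p c) = kpsi u p (kdiff h c).
Proof.
move=> up e; set w := \sum_k u k * h k.
have DE (x : KV) : kdiff h (kwedge u x) = w *: x - kwedge u (kdiff h x).
  by rewrite -kdiff_wedge addrK.
have PE (x : KV) : kdiff (delta p) (kwedge u x) = - kwedge u (kdiff (delta p) x).
  apply/eqP; rewrite -addr_eq0 kdiff_wedge (_ : \sum_k _ = 0) ?scale0r //.
  rewrite (bigD1 p) //= up mul0r add0r big1 // => k kp.
  by rewrite /delta (negbTE kp) mulr0.
have PD (x : KV) : kdiff h (kdiff (delta p) x) = - kdiff (delta p) (kdiff h x).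
  by apply/eqP; rewrite -addr_eq0 kdiff_anti.
rewrite /kpsi !(kdiff_step _ e) !kdiffD DE PE kdiff_delta2 kwedge0 oppr0 addr0 PD kwedgeN opprK.
by rewrite -addrA addrAC subrr add0r.
Qed.

Lemma kpsi_supp u p i (c : KV) : (forall J : {set 'I_r}, #|J| <> i -> c J = 0) ->
  forall J : {set 'I_r}, #|J| <> i -> kpsi u p c J = 0.
Proof.
move=> hc J hJ; rewrite /kpsi ffunE hc // add0r ffunE; apply: big1 => t tJ.
rewrite ffunE big1 ?scaler0 // => j jJt; rewrite hc ?scaler0 //.
rewrite cardsU1 jJt; rewrite (cardsD1 t J) tJ in hJ; exact: hJ.
Qed.

Lemma kpsi_fix u (p : 'I_r) (c : KV) : (forall J : {set 'I_r}, p \in J -> c J = 0) ->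
  kpsi u p c = c.
Proof. by move=> hc; rewrite /kpsi kdiff_delta0 // kwedge0 addr0. Qed.

End Ops.

Section Shift.
Variables (K : fieldType) (n : nat) (V : lmodType {mpoly K[n]}) (m v : nat).
Local Notation S := {mpoly K[n]}.
Local Notation L := (@lshift m v).
Local Notation R := (@rshift m v).

Lemma lsinj : injective L. Proof. exact: lshift_inj. Qed.

Lemma split_lshift (l : 'I_m) : split (L l) = inl l.
Proof. by rewrite -[L l]/(@unsplit m v (inl l)) unsplitK. Qed.

Lemma split_rshift (j : 'I_v) : split (R j) = inr j.
Proof. by rewrite -[R j]/(@unsplit m v (inr j)) unsplitK. Qed.

Lemma rshift_notin_img (A : {set 'I_m}) j : R j \notin L @: A.
Proof. by apply/imsetP => -[x _ /eqP]; rewrite eq_rlshift. Qed.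

Lemma memL (A : {set 'I_m}) l : (L l \in L @: A) = (l \in A).
Proof. exact: mem_imset lsinj. Qed.

Lemma ksign_img (A : {set 'I_m}) l : ksign K n (L @: A) (L l) = ksign K n A l.
Proof.
rewrite /ksign; congr (_ ^+ _); rewrite -(card_imset _ lsinj).
apply: eq_card => k; rewrite inE; case: (split_ordP k) => [x ->|x ->].
  by rewrite !memL inE.
by rewrite (negbTE (rshift_notin_img _ _)); apply/esym/negbTE/rshift_notin_img.
Qed.

Definition rho (c : {ffun {set 'I_(m + v)} -> V}) : {ffun {set 'I_m} -> V} :=
  [ffun J : {set 'I_m} => c (L @: J)].
Definition iota (c : {ffun {set 'I_m} -> V}) : {ffun {set 'I_(m + v)} -> V} :=
  [ffun J : {set 'I_(m + v)} => if [forall j : 'I_v, R j \notin J] then c (L @^-1: J) else 0].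

Lemma preim_img (A : {set 'I_m}) : L @^-1: (L @: A) = A.
Proof. by apply/setP=> x; rewrite inE memL. Qed.

Lemma img_preim (J : {set 'I_(m + v)}) : [forall j, R j \notin J] -> L @: (L @^-1: J) = J.
Proof.
move/forallP=> h; apply/setP=> k; case: (split_ordP k) => [x ->|x ->].
  by rewrite memL inE.
by rewrite (negbTE (rshift_notin_img _ _)) (negbTE (h x)).
Qed.

Lemma img_cond (A : {set 'I_m}) : [forall j, R j \notin L @: A].
Proof. by apply/forallP => j; apply: rshift_notin_img. Qed.

Lemma iota_img c (A : {set 'I_m}) : iota c (L @: A) = c A.
Proof. by rewrite ffunE img_cond preim_img. Qed.

Lemma iota_r c (J : {set 'I_(m + v)}) j : R j \in J -> iota c J = 0.
Proof. by move=> hj; rewrite ffunE; case: ifP => // /forallP /(_ j); rewrite hj. Qed.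

Lemma rho_iota c : rho (iota c) = c.
Proof. by apply/ffunP=> A; rewrite ffunE iota_img. Qed.

Lemma iotaD c1 c2 : iota (c1 + c2) = iota c1 + iota c2.
Proof. by apply/ffunP=> J; rewrite !ffunE; case: ifP; rewrite ?addr0 // ffunE. Qed.
Lemma iotaZ s c : iota (s *: c) = s *: iota c.
Proof. by apply/ffunP=> J; rewrite !ffunE; case: ifP; rewrite ?scaler0 // ffunE. Qed.
Lemma rhoD c1 c2 : rho (c1 + c2) = rho c1 + rho c2.
Proof. by apply/ffunP=> J; rewrite !ffunE. Qed.
Lemma rhoZ s c : rho (s *: c) = s *: rho c.
Proof. by apply/ffunP=> J; rewrite !ffunE. Qed.

Lemma iota_cycle (h : 'I_(m + v) -> S) c :
  kdiff h (iota c) = iota (kdiff (fun l => h (L l)) c).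
Proof.
apply/ffunP=> J; case: (boolP [forall j, R j \notin J]) => hJ.
  rewrite -(img_preim hJ) iota_img; set A := L @^-1: J.
  rewrite !ffunE big_split_ord /= [X in _ + X]big1 ?addr0.
    apply: eq_big => [l|l _]; first by rewrite memL.
    by rewrite ksign_img -imsetU1 iota_img.
  by move=> j _; rewrite (@iota_r _ _ j) ?scaler0 // setU11.
rewrite [RHS]ffunE (negbTE hJ) ffunE; apply: big1 => k _.
move: hJ; rewrite negb_forall => /existsP [j]; rewrite negbK => hj.
by rewrite (@iota_r _ _ j) ?scaler0 // setU1r.
Qed.

Lemma rho_cycle (h : 'I_(m + v) -> S) c : (forall j, h (R j) = 0) ->
  kdiff (fun l => h (L l)) (rho c) = rho (kdiff h c).
Proof.
move=> hr; apply/ffunP=> A; rewrite !ffunE big_split_ord /= [X in _ = _ + X]big1 ?addr0.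
  apply: eq_big => [l|l _]; first by rewrite memL.
  by rewrite ksign_img ffunE imsetU1.
by move=> j _; rewrite hr mulr0 scale0r.
Qed.

Lemma iota_supp i (c : {ffun {set 'I_m} -> V}) : (forall A : {set 'I_m}, #|A| <> i -> c A = 0) ->
  forall J : {set 'I_(m + v)}, #|J| <> i -> iota c J = 0.
Proof.
move=> hc J hJ; rewrite ffunE; case: ifP => // h; apply: hc.
by rewrite -(card_imset _ lsinj) img_preim.
Qed.

Lemma rho_supp i (c : {ffun {set 'I_(m + v)} -> V}) : (forall J : {set 'I_(m + v)}, #|J| <> i -> c J = 0) ->
  forall A : {set 'I_m}, #|A| <> i -> rho c A = 0.
Proof. by move=> hc A hA; rewrite ffunE hc // (card_imset _ lsinj). Qed.

End Shift.

Section Retract.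
Variables (K : fieldType) (n : nat).
Local Notation S := {mpoly K[n]}.

Lemma kdiff_map (V1 V2 : lmodType S) r (h : 'I_r -> S) (i : V1 -> V2)
    (c : {ffun {set 'I_r} -> V1}) :
  (forall x y, i (x + y) = i x + i y) -> (forall s x, i (s *: x) = s *: i x) ->
  kdiff h [ffun J => i (c J)] = [ffun J => i (kdiff h c J)].
Proof.
move=> iD iZ; have i0 : i 0 = 0 by rewrite -(scale0r (0 : V1)) iZ scale0r.
apply/ffunP=> J; rewrite !ffunE (big_morph i iD i0); apply: eq_bigr => k _.
by rewrite ffunE iZ.
Qed.

Lemma reg_le_retract (V1 V2 : lmodType S) (N1 : V1 -> Prop) hom1
    (N2 : V2 -> Prop) hom2 (i : V1 -> V2) (p : V2 -> V1) :
  (forall x y, i (x + y) = i x + i y) -> (forall s x, i (s *: x) = s *: i x) ->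
  (forall x y, p (x + y) = p x + p y) -> (forall s x, p (s *: x) = s *: p x) ->
  (forall x, N1 x -> N2 (i x)) -> (forall y, N2 y -> N1 (p y)) ->
  (forall d x, hom1 d x -> hom2 d (i x)) -> (forall x, p (i x) = x) ->
  reg_le N1 hom1 N2 hom2.
Proof.
move=> iD iZ pD pZ iN pN ih pi k j [c [cN csupp chom ccyc cnb]].
have i0 : i 0 = 0 by rewrite -(scale0r (0 : V1)) iZ scale0r.
exists k, j; split; last by rewrite lexx.
exists [ffun J => i (c J)]; split.
- by move=> J; rewrite ffunE; apply: iN.
- by move=> J hJ; rewrite ffunE csupp.
- by move=> J; rewrite ffunE; apply: ih; apply: chom.
- by rewrite kdiff_map // ccyc; apply/ffunP=> J; rewrite !ffunE.
move=> [b [bN hb]]; apply: cnb; exists [ffun J => p (b J)]; split.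
  by move=> J; rewrite ffunE; apply: pN.
rewrite kdiff_map // hb; apply/ffunP=> J; rewrite !ffunE; apply: pi.
Qed.

End Retract.

Section Final.
Variables (K : fieldType) (n : nat) (M : lmodType {mpoly K[n]}) (m v : nat).
Variables (f : 'I_m -> {mpoly K[n]}) (g : 'I_v -> {mpoly K[n]}).
Variable a : 'I_v -> 'I_m -> {mpoly K[n]}.
Local Notation S := {mpoly K[n]}.
Local Notation KM r := {ffun {set 'I_r} -> M}.

Definition hs s (k : 'I_(m + v)) : S :=
  match split k with inl l => f l | inr j => if (s <= j)%N then g j else 0 end.
Definition us (j : 'I_v) (k : 'I_(m + v)) : S :=
  match split k with inl l => a j l | inr _ => 0 end.

Fixpoint Psi s (c : KM (m + v)) : KM (m + v) :=
  match s with
  | 0 => c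
  | s'.+1 => match (insub s' : option 'I_v) with
             | Some j => kpsi (us j) (rshift m j) (Psi s' c)
             | None => Psi s' c end
  end.

Lemma PsiD s c1 c2 : Psi s (c1 + c2) = Psi s c1 + Psi s c2.
Proof. by elim: s => //= s IH; case: insub => [j|]; rewrite IH ?kpsiD. Qed.

Lemma PsiZ s x c : Psi s (x *: c) = x *: Psi s c.
Proof. by elim: s => //= s IH; case: insub => [j|]; rewrite IH ?kpsiZ. Qed.

Lemma Psi_iota s c : Psi s (@iota K n M m v c) = @iota K n M m v c.
Proof.
elim: s => //= s IH; case: insub => [j|]; rewrite IH //.
by apply: kpsi_fix => J hJ; apply: iota_r hJ.
Qed.

Hypothesis ha : forall j, g j = \sum_(i < m) a j i * f i.

Lemma kpsi0 r u (p : 'I_r) : kpsi u p (0 : KM r) = 0.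
Proof. by rewrite /kpsi kdiff0 kwedge0 addr0. Qed.

Lemma Psi_cyc i s c : (s <= v)%N -> kcycles (hs 0) i c -> kcycles (hs s) i (Psi s c).
Proof.
move=> + hc; elim: s => //= s IH sv.
have [supp cyc] := IH (ltnW sv).
case: insubP => [j _ ej|/negP]; last by rewrite sv.
split; first exact: kpsi_supp.
rewrite (@kpsi_chain _ _ _ _ (hs s)) ?cyc ?kpsi0 //.
  by rewrite /us split_rshift.
have -> : \sum_k us j k * hs s k = g j.
  rewrite big_split_ord /= [X in _ + X]big1 ?addr0.
    by rewrite ha; apply: eq_bigr => l _; rewrite /us /hs split_lshift.
  by move=> x _; rewrite /us split_rshift mul0r.
move=> k; case: (split_ordP k) => [l ->|x ->]; rewrite /hs /delta ?split_lshift ?split_rshift.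
  by rewrite eq_lrshift mul0r subr0.
rewrite eq_rshift; case: (eqVneq x j) => [->|xj].
  by rewrite ej ltnn leqnn mul1r subrr.
rewrite mul0r subr0 ltn_neqAle.
have -> : (s != x) = true; last by [].
apply/eqP=> sx; move/eqP: xj; apply; apply/val_inj; by rewrite /= -sx ej.
Qed.

End Final.

Theorem lemma1p5 (K : fieldType) (n : nat) (M : lmodType {mpoly K[n]})
    (homM : int -> M -> Prop) (m v : nat)
    (f : 'I_m -> {mpoly K[n]}) (df : 'I_m -> nat)
    (g : 'I_v -> {mpoly K[n]}) (dg : 'I_v -> nat) :
  graded_module homM -> fin_gen M ->
  (forall i, f i \is (df i).-homog) ->
  (forall j, g j \is (dg j).-homog) ->
  (forall j, exists a : 'I_m -> {mpoly K[n]}, g j = \sum_(i < m) a i * f i) ->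
  forall i : nat,
    reg_le (kcycles f i) (khom (fun k => (df k)%:Z) homM)
           (kcycles (catf f g) i)
           (khom (catf (fun k => (df k)%:Z) (fun k => (dg k)%:Z)) homM).
Proof.
move=> gM _ _ _ ga i.
have [a ha] := fin_all_exists ga.
have [hom0 _ _ _ _] := gM.
pose io := @iota K n M m v.
pose pr c := @rho K n M m v (Psi a v c).
apply: (@reg_le_retract K n _ _ _ _ _ _ io pr).
- exact: iotaD.
- exact: iotaZ.
- by move=> x y; rewrite /pr PsiD rhoD.
- by move=> s x; rewrite /pr PsiZ rhoZ.
- move=> x [xs xc]; split; first exact: iota_supp.
  rewrite /io iota_cycle (@kdiff_ext _ _ _ _ (fun l => catf f g (lshift v l)) f).
    by rewrite xc; apply/ffunP=> J; rewrite !ffunE; case: ifP.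
  by move=> l; rewrite /catf split_lshift.
- move=> y [ys yc].
  have h0 : kcycles (hs f g 0) i y.
    by split=> //; rewrite -yc.
  have [ps pc] := Psi_cyc ha (leqnn v) h0.
  split; first exact: rho_supp.
  rewrite /pr (@kdiff_ext _ _ _ _ f (fun l => hs f g v (lshift v l))).
    rewrite rho_cycle ?pc; first by apply/ffunP=> J; rewrite !ffunE.
    by move=> j; rewrite /hs split_rshift leqNgt ltn_ord.
  by move=> l; rewrite /hs split_lshift.
- move=> d x hx J; rewrite /io ffunE; case: ifP => h; last exact: hom0.
  rewrite -{1}(img_preim h) big_imset /=.
    by rewrite (eq_bigr (fun l => (df l)%:Z)) ?hx // => l _; rewrite /catf split_lshift.
  by move=> x1 x2 _ _; apply: lsinj.
- by move=> x; rewrite /pr /io Psi_iota rho_iota.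
Qed.
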